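(* Let $d\ge2$ and let $A,B$ be $d$-dimensional systems, with $\{\Phi^y_{AB}\}_{y=1}^{d^2}$ the $d^2$ qudit Bell states (an orthonormal basis of maximally entangled pure states, as projectors). The POVM $\{P^y_{AB}\}_{y=1}^{d^2}$ with $P^y_{AB}=\frac12\Phi^y_{AB}+\frac{1}{2d^2}I_{AB}$ is two-extendible, with two-extension $G^{y,y'}_{ABE}=\frac{1}{2d^2}\Phi^y_{AB}\otimes I_E+\frac{1}{2d^2}\Phi^{y'}_{AE}\otimes I_B$, $y,y'\in\{1,\dots,d^2\}$; but it does not belong to $\operatorname{1WL}$ (its elements do not have positive partial transpose).
   Context: A bipartite POVM $\{P^y_{AB}\}_{y\in\mathcal{Y}}$ is two-extendible if there exists a POVM $\{G^{y,y'}_{ABE}\}_{y,y'\in\mathcal{Y}}$ on $ABE$, with $E\cong B$, such that $\sum_{y'}G^{y,y'}_{ABE}=P^y_{AB}\otimes I_E$ for all $y$ and $F_{BE}G^{y,y'}_{ABE}F_{BE}^\dagger=G^{y',y}_{ABE}$ for all $y,y'$, where $F_{BE}$ is the swap unitary. A POVM is in $\operatorname{1WL}$ if $P^y_{AB}=\sum_{x}E^x_A\otimes F^{x,y}_B$ for a POVM $\{E^x_A\}_x$ and POVMs $\{F^{x,y}_B\}_y$ for each $x$. *)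

(* Defs.v *)
From mathcomp Require Import all_boot all_order all_algebra algC.
Set Implicit Arguments. Unset Strict Implicit. Unset Printing Implicit Defensive.
Import Order.TTheory GRing.Theory Num.Theory.
Local Open Scope ring_scope.

Definition op (T : finType) := T -> T -> algC.

Definition psd (T : finType) (M : op T) : Prop :=
  forall v : T -> algC, 0 <= \sum_i \sum_j (v i)^* * M i j * v j.

Definition idop (T : finType) : op T := fun i j => (i == j)%:R.

Definition is_POVM (T Y : finType) (P : Y -> op T) : Prop :=
  (forall y, psd (P y)) /\ (forall i j, \sum_y P y i j = idop i j).

Definition tens (S T : finType) (M : op S) (N : op T) : op (S * T)%type :=
  fun i j => M i.1 j.1 * N i.2 j.2.

Definition ptrans2 (S T : finType) (M : op (S * T)%type) : op (S * T)%type :=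
  fun i j => M (i.1, j.2) (j.1, i.2).

(* Conjugation by the swap unitary F_{BE} on A B E (labels ((a,b),e)). *)
Definition swapBE (S T : finType) (M : op (S * T * T)%type) : op (S * T * T)%type :=
  fun i j => M (i.1.1, i.2, i.1.2) (j.1.1, j.2, j.1.2).

(* An operator M_{AE} on A E, viewed as M_{AE} ⊗ I_B on A B E. *)
Definition embAE (S T : finType) (M : op (S * T)%type) : op (S * T * T)%type :=
  fun i j => M (i.1.1, i.2) (j.1.1, j.2) * (i.1.2 == j.1.2)%:R.

Definition two_extension (S T Y : finType) (P : Y -> op (S * T)%type)
    (G : Y -> Y -> op (S * T * T)%type) : Prop :=
  is_POVM (fun yy : (Y * Y)%type => G yy.1 yy.2) /\
  (forall y i j, \sum_y' G y y' i j = tens (P y) (@idop T) i j) /\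
  (forall y y' i j, swapBE (G y y') i j = G y' y i j).

Definition two_extendible (S T Y : finType) (P : Y -> op (S * T)%type) : Prop :=
  exists G, two_extension P G.

Definition in_1WL (S T Y : finType) (P : Y -> op (S * T)%type) : Prop :=
  exists (X : finType) (E : X -> op S) (F : X -> Y -> op T),
    is_POVM E /\ (forall x, is_POVM (F x)) /\
    (forall y i j, P y i j = \sum_x E x i.1 j.1 * F x y i.2 j.2).

(* Qudit Bell states, labelled y = (p,q) : 'I_d * 'I_d (d^2 of them):
   |Phi_{p,q}> = (X^p Z^q ⊗ I) (1/sqrt d) sum_i |i,i>, w primitive d-th root,
   i.e. component at (a,b) is [a = b + p mod d] w^(q b) / sqrt d. *)
Definition bell_vec (d : nat) (w : algC) (y : ('I_d * 'I_d)%type) : 'I_d * 'I_d -> algC :=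
  fun r => ((r.1 : nat) == (r.2 + y.1) %% d)%N%:R * w ^+ (y.2 * r.2) / sqrtC d%:R.

Definition bell (d : nat) (w : algC) (y : ('I_d * 'I_d)%type) : op ('I_d * 'I_d)%type :=
  fun r s => bell_vec w y r * (bell_vec w y s)^*.

Definition Pbell (d : nat) (w : algC) (y : ('I_d * 'I_d)%type) : op ('I_d * 'I_d)%type :=
  fun r s => 2^-1 * bell w y r s + (2 * (d ^ 2)%:R)^-1 * idop r s.

Definition Gbell (d : nat) (w : algC) (y y' : ('I_d * 'I_d)%type)
    : op ('I_d * 'I_d * 'I_d)%type :=
  fun i j => (2 * (d ^ 2)%:R)^-1 * tens (bell w y) (@idop 'I_d) i j
           + (2 * (d ^ 2)%:R)^-1 * embAE (bell w y') i j.

Arguments bell_vec d w y r : clear implicits.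
Arguments bell d w y r s : clear implicits.
Arguments Pbell d w y r s : clear implicits.
Arguments Gbell d w y y' i j : clear implicits.

(* Main.v *)
Require Import Defs.
From mathcomp Require Import all_boot all_order all_algebra algC.
From mathcomp Require Import ring.
Import Order.TTheory GRing.Theory Num.Theory.
Local Open Scope ring_scope.
Set Implicit Arguments. Unset Strict Implicit. Unset Printing Implicit Defensive.

Lemma psd_ext (T : finType) (M N : op T) :
  (forall i j, M i j = N i j) -> psd N -> psd M.
Proof.
move=> e h v; have := h v; congr (_ <= _).
by apply: eq_bigr => i _; apply: eq_bigr => j _; rewrite e.
Qed.

Lemma psd_gram (T K : finType) (u : K -> T -> algC) :
  psd (fun i j => \sum_k u k i * (u k j)^*).
Proof.
move=> v.
have -> : \sum_i \sum_j (v i)^* * (\sum_k u k i * (u k j)^*) * v j =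
  \sum_k (\sum_i (v i)^* * u k i) * (\sum_i (v i)^* * u k i)^*.
  transitivity (\sum_k \sum_i \sum_j (v i)^* * u k i * ((v j)^* * u k j)^*).
    rewrite [RHS]exchange_big /=; apply: eq_bigr => i _.
    rewrite [RHS]exchange_big /=; apply: eq_bigr => j _.
    rewrite mulr_sumr mulr_suml; apply: eq_bigr => k _.
    rewrite rmorphM /= conjCK; ring.
  apply: eq_bigr => k _; rewrite mulr_suml; apply: eq_bigr => i _.
  by rewrite rmorph_sum mulr_sumr.
apply: sumr_ge0 => k _; exact: mul_conjC_ge0.
Qed.

Lemma psd_comb (T : finType) (a b : algC) (M N : op T) :
  0 <= a -> 0 <= b -> psd M -> psd N -> psd (fun i j => a * M i j + b * N i j).
Proof.
move=> ha hb hM hN v.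
have -> : \sum_i \sum_j (v i)^* * (a * M i j + b * N i j) * v j =
   a * (\sum_i \sum_j (v i)^* * M i j * v j) + b * (\sum_i \sum_j (v i)^* * N i j * v j).
  rewrite !mulr_sumr -big_split; apply: eq_bigr => i _.
  rewrite !mulr_sumr -big_split; apply: eq_bigr => j _; rewrite /=; ring.
by apply: addr_ge0; apply: mulr_ge0.
Qed.

Lemma psd_idop (T : finType) : psd (@idop T).
Proof.
have := @psd_gram T T (fun (k i : T) => ((i == k)%:R : algC)); apply: psd_ext => i j.
rewrite /idop (bigD1 j) //= big1 ?addr0; last first.
  by move=> k; rewrite eq_sym => /negbTE ->; rewrite conjC0 mulr0.
by rewrite eqxx conjC1 mulr1.
Qed.

Lemma sum_delta (T : finType) (i : T) (h : T -> algC) :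
  \sum_k (k == i)%:R * h k = h i.
Proof.
by rewrite (bigD1 i) //= eqxx mul1r big1 ?addr0 // => k /negbTE ->; rewrite mul0r.
Qed.

Lemma sum_delta2 (T : finType) (i j : T) (a b : algC) (h : T -> algC) :
  \sum_k ((k == i)%:R * a + (k == j)%:R * b) * h k = a * h i + b * h j.
Proof.
transitivity (\sum_k (k == i)%:R * (a * h k) + \sum_k (k == j)%:R * (b * h k)).
  by rewrite -big_split /=; apply: eq_bigr => k _; ring.
by rewrite !sum_delta.
Qed.

Definition f4 (m11 m12 m21 m22 x1 x2 : algC) :=
  x1^* * m11 * x1 + x1^* * m12 * x2 + x2^* * m21 * x1 + x2^* * m22 * x2.

Lemma psd_f4 (T : finType) (M : op T) (i j : T) (x1 x2 : algC) :
  psd M -> 0 <= f4 (M i i) (M i j) (M j i) (M j j) x1 x2.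
Proof.
move=> /(_ (fun k => (k == i)%:R * x1 + (k == j)%:R * x2)).
have -> : \sum_k \sum_l ((k == i)%:R * x1 + (k == j)%:R * x2)^* * M k l *
   ((l == i)%:R * x1 + (l == j)%:R * x2) =
   \sum_k ((k == i)%:R * x1^* + (k == j)%:R * x2^*) *
   (\sum_l ((l == i)%:R * x1 + (l == j)%:R * x2) * M k l).
  apply: eq_bigr => k _; rewrite mulr_sumr; apply: eq_bigr => l _.
  rewrite rmorphD !rmorphM /= !conjC_nat; ring.
under eq_bigr => k _ do rewrite sum_delta2.
by rewrite sum_delta2 /f4; congr (_ <= _); ring.
Qed.

Ltac lin E := match type of E with ?l = ?r =>
  apply/eqP; rewrite -subr_eq0; apply/eqP;
  first [ transitivity (l - r); [ring | by rewrite E subrr]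
        | transitivity (r - l); [ring | by rewrite E subrr] ] end.

Lemma ge0_conj (z : algC) : 0 <= z -> z^* = z.
Proof. by move=> h; apply: conj_Creal; apply: ger0_real. Qed.

Lemma psd2_props (g11 g12 g21 g22 : algC) :
  (forall x1 x2, 0 <= f4 g11 g12 g21 g22 x1 x2) ->
  [/\ 0 <= g11, 0 <= g22 & g21 = g12^*].
Proof.
move=> hG.
have h11 : 0 <= g11.
  by have := hG 1 0; congr (_ <= _); rewrite /f4 conjC1 conjC0; ring.
have h22 : 0 <= g22.
  by have := hG 0 1; congr (_ <= _); rewrite /f4 conjC1 conjC0; ring.
have K c : g12 * c + c^* * g21 = g12^* * c^* + c * g21^*.
  have E := ge0_conj (hG 1 c).
  rewrite /f4 !rmorphD !rmorphM /= !conjCK !conjC1 (ge0_conj h11) (ge0_conj h22) in E.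
  lin E.
have K1 := K 1; rewrite conjC1 in K1.
have Ki := K 'i; rewrite conjCi in Ki.
have Ki' : 'i * (g12 - g21 + g12^* - g21^*) = 0 by lin Ki.
move/eqP: Ki'; rewrite mulf_eq0 (negbTE (neq0Ci _)) /= => /eqP Ki2.
split => //; apply/eqP; rewrite -subr_eq0; apply/eqP.
have -> : g21 - g12^* = ((g12 + g21 - g12^* - g21^*) - (g12 - g21 + g12^* - g21^*)) / 2.
  by field.
have K1' : g12 + g21 - g12^* - g21^* = 0 by lin K1.
by rewrite K1' Ki2 subrr mul0r.
Qed.

Lemma schur2 (e11 e12 e21 e22 g11 g12 g21 g22 v1 v2 : algC) :
  (forall x1 x2, 0 <= f4 e11 e12 e21 e22 x1 x2) ->
  (forall x1 x2, 0 <= f4 g11 g12 g21 g22 x1 x2) ->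
  0 <= f4 (e11 * g11) (e12 * g12) (e21 * g21) (e22 * g22) v1 v2.
Proof.
move=> hE hG.
have [he11 he22 he21] := psd2_props hE.
have [h11 h22 h21] := psd2_props hG.
have cs : 0 <= g11 * (g11 * g22 - g12^* * g12).
  have := hG (- g12) g11; congr (_ <= _).
  rewrite /f4 rmorphN /= (ge0_conj h11) h21; ring.
have v2ge : 0 <= v2 * v2^* := mul_conjC_ge0 v2.
move: h11; rewrite le0r => /orP [/eqP g0 | gp].
  have g12z : g12 = 0.
    apply/eqP; apply: contraT => nz.
    have nn : g12^* * g12 != 0.
      by rewrite mulf_eq0 negb_or nz andbT conjC_eq0.
    set t := (g22 + 1) / (g12^* * g12).
    have := hG (- (t * g12)) 1.
    have -> : f4 g11 g12 g21 g22 (- (t * g12)) 1 = - (g22 + 2).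
      rewrite /f4 g0 h21 rmorphN rmorphM /= conjC1 /t rmorphM /= fmorphV /=.
      rewrite rmorphD rmorphM /= conjCK conjC1 (ge0_conj h22).
      by field; rewrite nz conjC_eq0 nz.
    rewrite oppr_ge0 => h.
    have h2 : 0 < g22 + 2 by apply: ltr_wpDl h22 _.
    by have := lt_le_trans h2 h; rewrite ltxx.
  have -> : f4 (e11 * g11) (e12 * g12) (e21 * g21) (e22 * g22) v1 v2 =
     e22 * g22 * (v2 * v2^*).
    by rewrite /f4 g0 h21 g12z conjC0; ring.
  by apply: mulr_ge0 => //; apply: mulr_ge0.
rewrite -(pmulr_rge0 _ gp).
have -> : g11 * f4 (e11 * g11) (e12 * g12) (e21 * g21) (e22 * g22) v1 v2 =
  f4 e11 e12 e21 e22 (g11 * v1) (g12 * v2) +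
  e22 * (v2 * v2^*) * (g11 * g22 - g12^* * g12).
  rewrite /f4 !rmorphM /= (ge0_conj (ltW gp)) h21; ring.
apply: addr_ge0 => //; apply: mulr_ge0; first by apply: mulr_ge0.
by rewrite -(pmulr_rge0 _ gp).
Qed.

Lemma psd_pd (X E : finType) (f : X -> algC) (g : X -> E) :
  psd (fun i j => f i * (f j)^* * (g i == g j)%:R).
Proof.
have := @psd_gram X E (fun e i => f i * (g i == e)%:R).
apply: psd_ext => i j.
transitivity (\sum_e (e == g j)%:R * (f i * (f j)^* * (g i == e)%:R)).
  by rewrite sum_delta.
apply: eq_bigr => e _; rewrite rmorphM /= conjC_nat eq_sym; ring.
Qed.

Lemma f4_sum (X : finType) (A B C D : X -> algC) x1 x2 :
  f4 (\sum_x A x) (\sum_x B x) (\sum_x C x) (\sum_x D x) x1 x2 =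
  \sum_x f4 (A x) (B x) (C x) (D x) x1 x2.
Proof.
rewrite /f4 !mulr_sumr !mulr_suml -!big_split /=; apply: eq_bigr => x _.
by [].
Qed.

Lemma idop_pair (S T : finType) (a a' : S) (b b' : T) :
  idop (a, b) (a', b') = idop a a' * idop b b'.
Proof. by rewrite /idop xpair_eqE -natrM mulnb. Qed.

Lemma w_unit n (w : algC) (hw : (n.+2).-primitive_root w) : w * w^* = 1.
Proof.
have h : `|w| ^+ n.+2 = 1 by rewrite -normrX (prim_expr_order hw) normr1.
move/eqP: h; rewrite pexpr_eq1 // => /eqP h.
by rewrite -normCK h expr1n.
Qed.

Lemma geo n (w : algC) (hw : (n.+2).-primitive_root w) (b b' : 'I_n.+2) :
  \sum_(q < n.+2) (w ^+ b * w^* ^+ b') ^+ q = (b == b')%:R * n.+2%:R.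
Proof.
have wu := w_unit hw.
have [<-|ne] := eqVneq b b'.
  rewrite -exprMn wu expr1n.
  under eq_bigr do rewrite expr1n.
  by rewrite sumr_const card_ord mul1r.
rewrite mul0r.
set z := w ^+ b * w^* ^+ b'.
have zd : z ^+ n.+2 = 1.
  rewrite /z exprMn -!exprM mulnC exprM (prim_expr_order hw) expr1n mul1r.
  by rewrite mulnC exprM -rmorphXn /= (prim_expr_order hw) rmorph1 expr1n.
have z1 : z != 1.
  apply: contraNneq ne => hz.
  have : w ^+ b == w ^+ b'.
    have e : w ^+ b = w ^+ b' * z by rewrite /z mulrCA -exprMn wu expr1n mulr1.
    by rewrite e hz mulr1.
  rewrite (eq_prim_root_expr hw) !modn_small // => /eqP h; exact: val_inj.
have := subrX1 z n.+2; rewrite zd subrr => /esym/eqP.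
by rewrite mulf_eq0 subr_eq0 (negbTE z1) /= => /eqP.
Qed.

Lemma bell_eq n (w : algC) (y : 'I_n.+2 * 'I_n.+2) (r s : 'I_n.+2 * 'I_n.+2) :
  bell n.+2 w y r s =
  ((r.1 : nat) == (r.2 + y.1) %% n.+2)%N%:R * ((s.1 : nat) == (s.2 + y.1) %% n.+2)%N%:R
  * (w ^+ r.2 * w^* ^+ s.2) ^+ y.2 / n.+2%:R.
Proof.
rewrite /bell /bell_vec !rmorphM /= fmorphV /= rmorphXn /= !conjC_nat.
have sg : 0 <= sqrtC (n.+2%:R : algC) by rewrite sqrtC_ge0 ler0n.
rewrite (ge0_conj sg).
rewrite exprMn -!exprM [(r.2 * _)%N]mulnC [(s.2 * _)%N]mulnC.
set t := sqrtC _.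
have ht : t * t = n.+2%:R by rewrite -expr2 sqrtCK.
have t0 : t != 0.
  by apply/eqP => t0; move: ht; rewrite t0 mulr0 => /eqP; rewrite eq_sym pnatr_eq0.
by rewrite -ht; field.
Qed.

Lemma keyI n (a b p : 'I_n.+2) : ((a : nat) == (b + p) %% n.+2)%N = (a == (b + p)%R).
Proof. by []. Qed.

Lemma eq_addl (V : zmodType) (a b p : V) : (a == b + p) = (p == a - b).
Proof. by rewrite [RHS]eq_sym subr_eq addrC. Qed.

Lemma keyJ n (a b p : 'I_n.+2) : ((a : nat) == (b + p) %% n.+2)%N = (p == a - b).
Proof. by rewrite keyI eq_addl. Qed.

Lemma bell_complete n (w : algC) (hw : (n.+2).-primitive_root w)
    (r s : 'I_n.+2 * 'I_n.+2) :
  \sum_y bell n.+2 w y r s = idop r s.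
Proof.
under eq_bigr do rewrite bell_eq !keyJ.
transitivity (\sum_(p < n.+2) \sum_(q < n.+2)
   (p == r.1 - r.2)%:R * (p == s.1 - s.2)%:R / n.+2%:R *
   (w ^+ r.2 * w^* ^+ s.2) ^+ q).
  rewrite pair_big /=; apply: eq_bigr => -[p q] _ /=; rewrite mulrAC.
  by [].
under eq_bigr do rewrite -mulr_sumr geo //.
have d0 : n.+2%:R != 0 :> algC by rewrite pnatr_eq0.
case: r s => [r1 r2] [s1 s2] /=; rewrite idop_pair /idop.
have [e|ne] := eqVneq r2 s2; last first.
  rewrite mulr0 big1 // => p _; rewrite mul0r mulr0 //.
subst s2.
transitivity (\sum_(p < n.+2) (p == r1 - r2)%:R * ((p == s1 - r2)%:R : algC)).
  apply: eq_bigr => p _; rewrite ?eqxx mul1r; field; by rewrite -natrD pnatr_eq0.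
rewrite (bigD1 (r1 - r2 : 'I_n.+2)) //= big1 ?addr0; last first.
  by move=> p /negPf ->; rewrite mul0r.
rewrite eqxx mul1r.
have [->|ne] := eqVneq r1 s1; first by rewrite ?eqxx /= ?mulr1.
have h : r1 - r2 != s1 - r2 by apply: contra ne => /eqP /addIr ->.
by rewrite (negbTE h) mulr1.
Qed.

Lemma bell_psd d (w : algC) y : psd (bell d w y).
Proof.
have := psd_pd (bell_vec d w y) (fun _ => tt).
by apply: psd_ext => r s; rewrite eqxx mulr1.
Qed.

Lemma Pbell_psd d (w : algC) y : psd (Pbell d w y).
Proof.
apply: psd_comb; [by rewrite invr_ge0 ler0n | | exact: bell_psd | exact: psd_idop].
by rewrite invr_ge0 mulr_ge0 ?ler0n.
Qed.

Lemma Gbell_psd d (w : algC) y y' : psd (Gbell d w y y').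
Proof.
have c0 : 0 <= (2 * (d ^ 2)%:R : algC)^-1 by rewrite invr_ge0 mulr_ge0 ?ler0n.
apply: psd_comb => //.
  have := psd_pd (fun i : 'I_d * 'I_d * 'I_d => bell_vec d w y i.1) (fun i => i.2).
  by apply: psd_ext.
have := psd_pd (fun i : 'I_d * 'I_d * 'I_d => bell_vec d w y' (i.1.1, i.2)) (fun i => i.1.2).
by apply: psd_ext.
Qed.

Lemma cst n : (2 * (n.+2 ^ 2)%:R : algC)^-1 * (n.+2%:R * n.+2%:R) = 2^-1.
Proof.
rewrite natrX; field.
by rewrite -natrD pnatr_eq0.
Qed.

Lemma sum_const_Y n (x : algC) :
  \sum_(y : 'I_n.+2 * 'I_n.+2) x = x * (n.+2%:R * n.+2%:R).
Proof. by rewrite sumr_const card_prod card_ord -[LHS]mulr_natr natrM. Qed.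

Lemma Pbell_POVM n (w : algC) (hw : (n.+2).-primitive_root w) :
  is_POVM (Pbell n.+2 w).
Proof.
split; first exact: Pbell_psd.
move=> r s; rewrite /Pbell big_split /= -mulr_sumr bell_complete //.
rewrite -mulr_suml sum_const_Y cst -mulrDl.
by field.
Qed.

Lemma sum_pair (X Y : finType) (F : X * Y -> algC) :
  \sum_p F p = \sum_x \sum_y F (x, y).
Proof. by rewrite pair_big; apply: eq_bigr => -[x y]. Qed.

Lemma bell_sum_scaled n (w : algC) (hw : (n.+2).-primitive_root w) r s (k m : algC) :
  \sum_y k * (bell n.+2 w y r s * m) = k * (idop r s * m).
Proof. by rewrite -mulr_sumr -mulr_suml bell_complete. Qed.

Lemma Gbell_POVM n (w : algC) (hw : (n.+2).-primitive_root w) :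
  is_POVM (fun yy : ('I_n.+2 * 'I_n.+2) * ('I_n.+2 * 'I_n.+2) => Gbell n.+2 w yy.1 yy.2).
Proof.
split; first by move=> yy; exact: Gbell_psd.
move=> [[a b] e] [[a' b'] e']; rewrite sum_pair /Gbell /tens /embAE /=.
under eq_bigr => y _ do rewrite big_split /= sum_const_Y bell_sum_scaled //.
rewrite big_split /= -!mulr_suml bell_sum_scaled // sum_const_Y.
rewrite !idop_pair.
set c := (2 * _)^-1.
have hc : c * (n.+2%:R * n.+2%:R) = 2^-1 by rewrite /c cst.
transitivity (c * (n.+2%:R * n.+2%:R) * 2 * (idop a a' * idop b b' * idop e e')).
  ring.
by rewrite hc; field.
Qed.

Lemma Gbell_marg n (w : algC) (hw : (n.+2).-primitive_root w) y i j :
  \sum_y' Gbell n.+2 w y y' i j = tens (Pbell n.+2 w y) (@idop 'I_n.+2) i j.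
Proof.
case: i j => [[a b] e] [[a' b'] e']; rewrite /Gbell /tens /embAE /Pbell /=.
rewrite big_split /= sum_const_Y bell_sum_scaled // !idop_pair.
set c := (2 * _)^-1.
have hc : c * (n.+2%:R * n.+2%:R) = 2^-1 by rewrite /c cst.
transitivity (c * (n.+2%:R * n.+2%:R) * (bell n.+2 w y (a, b) (a', b') * idop e e')
   + c * (idop a a' * idop e e' * idop b b')); first ring.
rewrite hc; ring.
Qed.

Lemma Gbell_swap d (w : algC) y y' i j :
  swapBE (Gbell d w y y') i j = Gbell d w y' y i j.
Proof. by rewrite /swapBE /Gbell /tens /embAE /= addrC. Qed.

Lemma witness_val n (w : algC) (hw : (n.+2).-primitive_root w) (p q : 'I_n.+2) :
  f4 (ptrans2 (Pbell n.+2 w (p, q)) (1 + p, 0) (1 + p, 0))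
     (ptrans2 (Pbell n.+2 w (p, q)) (1 + p, 0) (p, 1))
     (ptrans2 (Pbell n.+2 w (p, q)) (p, 1) (1 + p, 0))
     (ptrans2 (Pbell n.+2 w (p, q)) (p, 1) (p, 1)) 1 (- (w ^+ q)^*)
  = 2 * (2 * (n.+2 ^ 2)%:R)^-1 - n.+2%:R^-1.
Proof.
have f1 : (p == 1 + p - 0) = false.
  rewrite subr0 eq_sym -subr_eq0 (_ : 1 + p - p = 1) ?oner_eq0 //; ring.
have f2 : (p == p - 1) = false.
  rewrite -subr_eq0 (_ : p - (p - 1) = 1) ?oner_eq0 //; ring.
have f3 : (p == 1 + p - 1) by rewrite (_ : 1 + p - 1 = p) //; ring.
have f5 : (p == p - 0) by rewrite subr0.
have o1 : ((1 : 'I_n.+2) == 0) = false by rewrite oner_eq0.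
have o2 : ((0 : 'I_n.+2) == 1) = false by rewrite eq_sym o1.
rewrite /f4 /ptrans2 /Pbell /= !bell_eq !keyJ /= f1 f2 f3 f5 /idop !xpair_eqE /= o1 eqxx /=.
rewrite modn_small // andbF o2 andbF !eqxx /= !expr0 !expr1 mul1r mulr1.
rewrite rmorphN !rmorphXn /= conjCK conjC1 !mulr1 !mul1r.
have uu : w ^+ q * w^* ^+ q = 1 by rewrite -exprMn (w_unit hw) expr1n.
set c := (2 * _)^-1.
have d0 : n.+2%:R != 0 :> algC by rewrite pnatr_eq0.
transitivity (c + c * (w ^+ q * w^* ^+ q) - (w ^+ q * w^* ^+ q) / n.+2%:R).
  by field; rewrite -natrD pnatr_eq0.
by rewrite uu; field; rewrite -natrD pnatr_eq0.
Qed.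

Lemma witness_neg n : 2 * (2 * (n.+2 ^ 2)%:R : algC)^-1 - n.+2%:R^-1 < 0.
Proof.
have -> : 2 * (2 * (n.+2 ^ 2)%:R : algC)^-1 - n.+2%:R^-1 =
   (1 - n.+2%:R) * (n.+2%:R ^+ 2)^-1.
  by rewrite natrX; field; rewrite -natrD pnatr_eq0.
rewrite pmulr_llt0; last by rewrite invr_gt0 exprn_gt0 // ltr0n.
by rewrite subr_lt0 ltr1n.
Qed.

Lemma not_ppt n (w : algC) (hw : (n.+2).-primitive_root w) y :
  ~ psd (ptrans2 (Pbell n.+2 w y)).
Proof.
case: y => p q h.
have := psd_f4 (1 + p, 0) (p, 1) 1 (- (w ^+ q)^*) h.
rewrite witness_val // => h2.
by have := lt_le_trans (witness_neg n) h2; rewrite ltxx.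
Qed.

Lemma transpose_f4 (g11 g12 g21 g22 : algC) :
  (forall x1 x2, 0 <= f4 g11 g12 g21 g22 x1 x2) ->
  (forall x1 x2, 0 <= f4 g11 g21 g12 g22 x1 x2).
Proof.
move=> h x1 x2; have := h x1^* x2^*; congr (_ <= _).
rewrite /f4 !conjCK; ring.
Qed.

Lemma not_1WL n (w : algC) (hw : (n.+2).-primitive_root w) :
  ~ in_1WL (Pbell n.+2 w).
Proof.
move=> [X [E [F [hE [hF hP]]]]].
set p : 'I_n.+2 := 0; set q : 'I_n.+2 := 0.
have := witness_val hw p q.
rewrite /ptrans2 !hP /= f4_sum => h.
suff : 0 <= 2 * (2 * (n.+2 ^ 2)%:R : algC)^-1 - n.+2%:R^-1.
  by move=> h2; have := lt_le_trans (witness_neg n) h2; rewrite ltxx.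
rewrite -h; apply: sumr_ge0 => x _; apply: schur2.
  by move=> x1 x2; apply: psd_f4; exact: hE.1.
apply: transpose_f4 => x1 x2; apply: psd_f4; exact: (hF x).1.
Qed.

Unset Implicit Arguments.

Theorem mainTheorem5 (d : nat) (hd : (2 <= d)%N) (w : algC)
    (hw : d.-primitive_root w) :
  is_POVM (Pbell d w) /\
  two_extension (Pbell d w) (Gbell d w) /\
  two_extendible (Pbell d w) /\
  (forall y, ~ psd (ptrans2 (Pbell d w y))) /\
  ~ in_1WL (Pbell d w).
Proof.
case: d hd w hw => [|[|n]] // _ w hw.
have hT : two_extension (Pbell n.+2 w) (Gbell n.+2 w).
  split; first exact: Gbell_POVM.
  split; first by move=> y i j; exact: Gbell_marg.
  by move=> y y' i j; exact: Gbell_swap.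
split; first exact: Pbell_POVM.
split; first exact: hT.
split; first by exists (Gbell n.+2 w).
split; first by move=> y; exact: not_ppt.
exact: not_1WL.
Qed.
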